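(* Consider a discrete-time random walk $(X_n)_{n\ge0}$ on $\mathbb{Z}$ with $X_0=0$ almost surely and i.i.d. increments, $\mathbb{P}(X_{n+1}-X_n=i)=p_i$, where there is a fixed positive integer $l$ with $p_i=0$ for $|i|>l$. Suppose the walk has positive bias, $\sum_{i=-l}^{l}ip_i>0$. Let $\gamma\in(0,1)$ be a solution of $$f(\gamma):=\sum_{i=1}^{l}\Big(\sum_{j=1}^{i}\gamma^j\Big)p_i-\sum_{i=1}^{l}\Big(\sum_{j=1}^{i}\gamma^{-j}\Big)p_{-i}=0$$ (such a solution exists). Then for every integer $\xi>0$, $$\mathbb{P}(\exists n\ \text{s.t.}\ X_n\le-\xi)\le\frac{1}{\gamma^{-\xi-1}-\gamma^{-1}+1}.$$ *)

(* Defs.v *)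
From HB Require Import structures.
From mathcomp Require Import all_boot all_order all_algebra.
From mathcomp Require Import all_classical all_reals all_analysis.
Set Implicit Arguments. Unset Strict Implicit. Unset Printing Implicit Defensive.
Import Order.TTheory GRing.Theory Num.Theory.
Local Open Scope classical_set_scope.
Local Open Scope ring_scope.

Definition step_distribution (R : realType) (l : nat) (p : int -> R) : Prop :=
  (forall i, 0 <= p i) /\
  (forall i : int, (l%:Z < `|i|)%R -> p i = 0) /\
  \sum_(i < (l + l).+1) p (i%:Z - l%:Z) = 1.

(* (X_n) is a random walk on Z under P, started at 0 a.s., with i.i.d.
   increments of law p: for every n, the joint law of the first n
   increments (X_1 - X_0, ..., X_n - X_{n-1}) is the product law p^{(x) n}. *)
Definition iid_walk (d : measure_display) (T : measurableType d)
  (R : realType) (P : probability T R) (X : nat -> T -> int) (p : int -> R)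
  : Prop :=
  (forall n (k : int), measurable [set w | X n w = k]) /\
  P [set w | X 0%N w != 0] = 0%E /\
  (forall (n : nat) (k : nat -> int),
     P [set w | forall i, (i < n)%N -> X i.+1 w - X i w = k i] =
     (\prod_(i < n) p (k i))%:E).

Definition drift (R : realType) (l : nat) (p : int -> R) : R :=
  \sum_(i < (l + l).+1) (i%:Z - l%:Z)%:~R * p (i%:Z - l%:Z).

Definition fgamma (R : realType) (l : nat) (p : int -> R) (g : R) : R :=
  \sum_(1 <= i < l.+1) (\sum_(1 <= j < i.+1) g ^+ j) * p (i%:Z)
  - \sum_(1 <= i < l.+1) (\sum_(1 <= j < i.+1) g ^- j) * p (- (i%:Z)).

(* Main.v *)
Require Import Defs.
From HB Require Import structures.
From mathcomp Require Import all_boot all_order all_algebra.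
From mathcomp Require Import all_classical all_reals all_analysis.
From mathcomp Require Import ring lra zify.
Import Order.TTheory GRing.Theory Num.Theory.
Local Open Scope classical_set_scope.
Local Open Scope ring_scope.
Set Implicit Arguments. Unset Strict Implicit. Unset Printing Implicit Defensive.

Lemma gz_anti (R : realType) (g : R) (y z : int) :
  0 < g -> g < 1 -> (y <= z)%R -> g ^ z <= g ^ y.
Proof.
move=> g0 g1 yz.
have -> : g ^ z = (g^-1) ^ (- z) by rewrite exprz_inv opprK.
have -> : g ^ y = (g^-1) ^ (- y) by rewrite exprz_inv opprK.
apply: ler_weXz2l; last by rewrite lerN2.
by rewrite invf_ge1 // ltW.
Qed.

Definition Wf (R : realType) (g : R) (y : int) : R :=
  if (0 <= y)%R then g ^ (y + 1) else g ^ y - 1 + g.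

Lemma Wf_key (R : realType) (g : R) (y s : int) :
  0 < g -> g < 1 -> Wf g (y + s) - Wf g y <= g ^ y * (Wf g s - g).
Proof.
move=> g0 g1.
have ug : g \is a GRing.unit by rewrite unitfE gt_eqF.
have E1 : forall z : int, g ^ (z + 1) = g ^ z * g by move=> z; rewrite exprzDr // expr1z.
rewrite /Wf !E1 exprzDr //.
have t0 := exprz_gt0 y g0; have q0 := exprz_gt0 s g0.
have le1 : forall z : int, (0 <= z)%R -> g ^ z <= 1.
  by move=> z z0; rewrite -(expr0z g); apply: gz_anti.
have ge1 : forall z : int, (z < 0)%R -> 1 <= g ^ z.
  by move=> z z0; rewrite -(expr0z g); apply: gz_anti => //; apply: ltW.
have g1' : 0 <= 1 - g by lra.
case: (lerP 0 y) => hy; case: (lerP 0 s) => hs; case: (lerP 0 (y + s)) => hys;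
 [ | | have h1 := le1 _ hy; have h2 := ge1 _ hs | have h1 := le1 _ hy; have h2 := ge1 _ hs
   | have h1 := ge1 _ hy; have h2 := le1 _ hs | have h1 := ge1 _ hy; have h2 := le1 _ hs | | ].
- lra.
- exfalso; lia.
-
  have : 0 <= (1 - g) * (g ^ y * (g ^ s - 1)) by apply: mulr_ge0 => //; apply: mulr_ge0; lra.
  nra.
-
  have : 0 <= (1 - g) * (1 - g ^ y) by apply: mulr_ge0 => //; lra.
  nra.
-
  have : 0 <= (1 - g) * (g ^ y - 1) by apply: mulr_ge0 => //; lra.
  nra.
-
  have : 0 <= (1 - g) * (g ^ y * (1 - g ^ s)) by apply: mulr_ge0 => //; apply: mulr_ge0; lra.
  nra.
- exfalso; lia.
- lra.
Qed.

Lemma rng_split (R : realFieldType) (l : nat) (F : int -> R) :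
  \sum_(0 <= i < (l+l).+1) F (i%:Z - l%:Z) =
  \sum_(1 <= i < l.+1) F (- (i%:Z)) + F 0 + \sum_(1 <= i < l.+1) F (i%:Z).
Proof.
rewrite (@big_cat_nat _ _ _ l) //; last by lia.
rewrite (@big_cat_nat _ _ _ l.+1 l) //; last by lia.
rewrite big_nat1 subrr /= addrA; congr (_ + _ + _).
- rewrite big_nat_rev big_add1 /=; apply: eq_big_nat => i /andP[_ hi].
  congr F; lia.
- rewrite (big_addn 1 (l+l).+1 l).
  have -> : ((l + l).+1 - l = l.+1)%N by lia.
  apply: eq_big_nat => i _; congr F; lia.
Qed.

Lemma geo1 (R : realType) (g : R) (i : nat) :
  (1 - g) * \sum_(1 <= j < i.+1) g ^+ j = g - g ^+ i.+1.
Proof.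
elim: i => [|i IH]; first by rewrite big_nil mulr0 expr1 subrr.
rewrite big_nat_recr //= mulrDr IH !exprS; ring.
Qed.

Lemma geo2 (R : realType) (g : R) (i : nat) : g != 0 ->
  (1 - g) * \sum_(1 <= j < i.+1) g ^- j = g ^- i - 1.
Proof.
move=> g0; elim: i => [|i IH]; first by rewrite big_nil mulr0 expr0 invr1 subrr.
rewrite big_nat_recr //= mulrDr IH exprSr invfM.
have : g ^- i = g ^- i * g^-1 * g by rewrite -mulrA mulVf // mulr1.
set a := g ^- i * g^-1 => ->; ring.
Qed.

Lemma sumW (R : realType) (l : nat) (p : int -> R) (g : R) :
  0 < g -> g < 1 -> fgamma l p g = 0 ->
  \sum_(0 <= i < (l+l).+1) p (i%:Z - l%:Z) * (Wf g (i%:Z - l%:Z) - g) = 0.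
Proof.
move=> g0 g1 hf.
have gn0 : g != 0 by rewrite gt_eqF.
rewrite (rng_split l (fun z => p z * (Wf g z - g))) /=.
rewrite {2}/Wf lexx add0r expr1z subrr mulr0 addr0.
have e1 : \sum_(1 <= i < l.+1) p (i%:Z) * (Wf g (i%:Z) - g) =
   - ((1 - g) * \sum_(1 <= i < l.+1) (\sum_(1 <= j < i.+1) g ^+ j) * p (i%:Z)).
  rewrite mulr_sumr -sumrN; apply: eq_bigr => i _.
  rewrite mulrA geo1 /Wf le0z_nat -PoszD addn1 -exprnP.
  ring.
have e2 : \sum_(1 <= i < l.+1) p (- i%:Z) * (Wf g (- i%:Z) - g) =
   ((1 - g) * \sum_(1 <= i < l.+1) (\sum_(1 <= j < i.+1) g ^- j) * p (- i%:Z)).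
  rewrite mulr_sumr; apply: eq_big_nat => i /andP[hi _].
  rewrite mulrA geo2 // /Wf.
  have -> : (0 <= - i%:Z) = false by apply/negbTE; rewrite -ltNge oppr_lt0 ltz_nat.
  rewrite -exprnN.
  ring.
rewrite e1 e2.
move: hf; rewrite /fgamma => /eqP; rewrite subr_eq0 => /eqP ->.
ring.
Qed.

Lemma Wf_gt0 (R : realType) (g : R) (y : int) : 0 < g -> g < 1 -> 0 < Wf g y.
Proof.
move=> g0 g1; rewrite /Wf; case: ifP => hy; first exact: exprz_gt0.
have : 1 <= g ^ y.
  rewrite -(expr0z g); apply: gz_anti => //; apply: ltW; rewrite ltNge hy //.
lra.
Qed.

Lemma Wf_mono (R : realType) (g : R) (y : int) (xi : nat) : 0 < g -> g < 1 ->
  (0 < xi)%N -> y <= - xi%:Z -> Wf g (- xi%:Z) <= Wf g y.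
Proof.
move=> g0 g1 xi0 hy; rewrite /Wf.
have -> : (0 <= - xi%:Z) = false by apply/negbTE; rewrite -ltNge oppr_lt0 ltz_nat.
have -> : (0 <= y) = false.
  apply/negbTE; rewrite -ltNge; apply: (le_lt_trans hy); rewrite oppr_lt0 ltz_nat //.
have := gz_anti g0 g1 hy; lra.
Qed.

Definition rng (l : nat) : seq int := [seq (i%:Z - l%:Z) | i <- index_iota 0 (l+l).+1].

Fixpoint allseqs (l N : nat) : seq (seq int) :=
  if N is N'.+1 then flatten [seq [seq a :: s | s <- allseqs l N'] | a <- rng l]
  else [:: [::]].

Fixpoint hits (xi : nat) (y : int) (s : seq int) : bool :=
  (y <= - xi%:Z) || (if s is a :: s' then hits xi (y + a) s' else false).

Definition NH (R : realType) (l : nat) (p : int -> R) (xi N : nat) (y : int) : R :=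
  \sum_(s <- allseqs l N) (~~ hits xi y s)%:R * \prod_(a <- s) p a.

Lemma sum_rng (R : realType) (l : nat) (F : int -> R) :
  \sum_(a <- rng l) F a = \sum_(0 <= i < (l+l).+1) F (i%:Z - l%:Z).
Proof. by rewrite big_map. Qed.

Lemma NH_rec (R : realType) (l : nat) (p : int -> R) (xi N : nat) (y : int) :
  NH l p xi N.+1 y = (~~ (y <= - xi%:Z))%:R * \sum_(a <- rng l) p a * NH l p xi N (y + a).
Proof.
rewrite /NH; change (allseqs l N.+1) with (flatten [seq [seq a :: s | s <- allseqs l N] | a <- rng l]).
rewrite big_flatten big_map mulr_sumr; apply: eq_bigr => a _.
rewrite big_map mulr_sumr mulr_sumr; apply: eq_bigr => s _.
rewrite big_cons /=; case: (y <= - xi%:Z) => /=; first by rewrite !mul0r.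
by rewrite mul1r; ring.
Qed.

Lemma superharm (R : realType) (l : nat) (p : int -> R) (g : R) (y : int) :
  0 < g -> g < 1 -> fgamma l p g = 0 -> (forall i, 0 <= p i) ->
  \sum_(a <- rng l) p a = 1 ->
  \sum_(a <- rng l) p a * Wf g (y + a) <= Wf g y.
Proof.
move=> g0 g1 hf p0 p1.
rewrite -subr_ge0.
have -> : Wf g y - \sum_(a <- rng l) p a * Wf g (y + a) =
          - \sum_(a <- rng l) p a * (Wf g (y + a) - Wf g y).
  rewrite -{1}[Wf g y]mul1r -p1 mulr_suml -sumrB -sumrN.
  by apply: eq_bigr => a _; ring.
rewrite oppr_ge0.
apply: (@le_trans _ _ (\sum_(a <- rng l) p a * (g ^ y * (Wf g a - g)))).
  by apply: ler_sum => a _; apply: ler_wpM2l => //; apply: Wf_key.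
rewrite (eq_bigr (fun a => g ^ y * (p a * (Wf g a - g)))); last by move=> a _; ring.
by rewrite -mulr_sumr sum_rng sumW // mulr0.
Qed.

Lemma NH_bound (R : realType) (l : nat) (p : int -> R) (g : R) (xi : nat) :
  0 < g -> g < 1 -> fgamma l p g = 0 -> (forall i, 0 <= p i) ->
  \sum_(a <- rng l) p a = 1 -> (0 < xi)%N ->
  forall N y, 1 - Wf g y / Wf g (- xi%:Z) <= NH l p xi N y.
Proof.
move=> g0 g1 hf p0 p1 xi0.
have Wx := Wf_gt0 (- xi%:Z) g0 g1.
have base : forall y, y <= - xi%:Z -> 1 - Wf g y / Wf g (- xi%:Z) <= 0.
  move=> y hy; rewrite subr_le0 ler_pdivlMr // mul1r; exact: Wf_mono.
have V0 : forall y, 0 <= Wf g y / Wf g (- xi%:Z).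
  by move=> y; apply: divr_ge0; apply: ltW; apply: Wf_gt0.
elim=> [|N IH] y.
  rewrite /NH /= big_cons big_nil big_nil addr0 mulr1 /= orbF.
  case: (boolP (y <= - xi%:Z)) => hy /=; first by apply: base.
  by have := V0 y; lra.
rewrite NH_rec.
case: (boolP (y <= - xi%:Z)) => hy /=; first by rewrite mul0r; apply: base.
rewrite mul1r.
apply: (@le_trans _ _ (\sum_(a <- rng l) p a * (1 - Wf g (y + a) / Wf g (- xi%:Z)))); last first.
  by apply: ler_sum => a _; apply: ler_wpM2l.
rewrite (eq_bigr (fun a => p a - (p a * Wf g (y + a)) / Wf g (- xi%:Z))); last first.
  by move=> a _; ring.
rewrite sumrB p1 -mulr_suml lerD2l lerN2 ler_pM2r ?invr_gt0 //.
exact: superharm.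
Qed.

Lemma meas_le (d : measure_display) (T : measurableType d) (X : nat -> T -> int) :
  (forall n (k : int), measurable [set w | X n w = k]) ->
  forall n (z : int), measurable [set w | X n w <= z].
Proof.
move=> mX n z.
have -> : [set w | X n w <= z] = \bigcup_(k : nat) [set w | X n w = z - k%:Z].
  apply/seteqP; split => w /=.
    move=> hw; exists (absz (z - X n w)) => //=.
    rewrite gez0_abs ?subr_ge0 //; ring.
  by move=> [k _ ->]; rewrite lerBlDr lerDl.
by apply: bigcupT_measurable => k; apply: mX.
Qed.

Lemma meas_diff (d : measure_display) (T : measurableType d) (X : nat -> T -> int) :
  (forall n (k : int), measurable [set w | X n w = k]) ->
  forall i (c : int), measurable [set w | X i.+1 w - X i w = c].
Proof.
move=> mX i c.
have -> : [set w | X i.+1 w - X i w = c] =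
  (\bigcup_(k : nat) ([set w | X i w = Posz k] `&` [set w | X i.+1 w = Posz k + c])) `|`
  (\bigcup_(k : nat) ([set w | X i w = Negz k] `&` [set w | X i.+1 w = Negz k + c])).
  apply/seteqP; split => w /=.
    move=> hw; case e: (X i w) => [k|k].
      by left; exists k => //; split => //; rewrite -e -hw; ring.
    by right; exists k => //; split => //; rewrite -e -hw; ring.
  by move=> [] [k _ [/= -> ->]]; ring.
by apply: measurableU; apply: bigcupT_measurable => k; apply: measurableI; apply: mX.
Qed.

Definition Cyl (T : Type) (X : nat -> T -> int) (N : nat) (s : seq int) : set T :=
  [set w | forall i, (i < N)%N -> X i.+1 w - X i w = nth 0 s i].

Lemma meas_Cyl (d : measure_display) (T : measurableType d) (X : nat -> T -> int) :
  (forall n (k : int), measurable [set w | X n w = k]) ->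
  forall N s, measurable (Cyl X N s).
Proof.
move=> mX; elim=> [|N IH] s.
  have -> : Cyl X 0 s = setT by apply/seteqP; split => w //= _ i.
  exact: measurableT.
have -> : Cyl X N.+1 s = Cyl X N s `&` [set w | X N.+1 w - X N w = nth 0 s N].
  apply/seteqP; split => w /=.
    by move=> h; split; [move=> i hi; apply: h; lia | apply: h].
  move=> [h1 h2] i; rewrite ltnS leq_eqVlt => /orP [/eqP -> //| hi]; exact: h1.
by apply: measurableI => //; apply: meas_diff.
Qed.

Lemma allseqsS l N : allseqs l N.+1 = [seq a :: s | a <- rng l, s <- allseqs l N].
Proof. by []. Qed.

Lemma allseqs_size l N s : s \in allseqs l N -> size s = N.
Proof.
elim: N s => [|N IH] s; first by rewrite inE => /eqP ->.
rewrite allseqsS => /allpairsP [[a t] [/= _ ht ->]] /=.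
by rewrite (IH _ ht).
Qed.

Lemma rng_uniq l : uniq (rng l).
Proof.
rewrite map_inj_uniq ?iota_uniq //.
by move=> i j /eqP; rewrite (inj_eq (addIr _)) => /eqP [].
Qed.

Lemma allseqs_uniq l N : uniq (allseqs l N).
Proof.
elim: N => [|N IH] //; rewrite allseqsS allpairs_uniq ?rng_uniq //.
by move=> [a s] [b t] _ _ /= [-> ->].
Qed.

Lemma path_nohit (X : nat -> int) (xi : nat) (s : seq int) :
  ~~ hits xi (X 0%N) s ->
  (forall i, (i < size s)%N -> X i.+1 - X i = nth 0 s i) ->
  forall n, (n <= size s)%N -> ~~ (X n <= - xi%:Z).
Proof.
elim: s X => [|a s IH] X /=.
  by rewrite orbF => h _ n; rewrite leqn0 => /eqP ->.
rewrite negb_or => /andP [h0 h1] hX [|n] hn //.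
have e : X 1%N = X 0%N + a by have := hX 0%N isT; rewrite /= => <-; ring.
apply: (IH (fun k => X k.+1)) => //.
  by rewrite /= e.
by move=> i hi; apply: (hX i.+1).
Qed.

Lemma measure_seq_disj (d : measure_display) (T : measurableType d) (R : realType)
  (mu : {measure set T -> \bar R}) (A : choiceType) (L : seq A) (F : A -> set T) :
  uniq L -> (forall a, measurable (F a)) ->
  (forall a b, a \in L -> b \in L -> a != b -> F a `&` F b = set0) ->
  mu (\big[setU/set0]_(a <- L) F a) = (\sum_(a <- L) mu (F a))%E.
Proof.
elim: L => [|a L IH] /=; first by rewrite !big_nil measure0.
move=> /andP [aL uL] mF hdis.
rewrite !big_cons measureU //.
- congr (_ + _)%E; apply: IH => // x y hx hy; apply: hdis; rewrite inE ?hx ?hy orbT //.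
- exact: bigsetU_measurable.
- rewrite -bigcup_seq; apply/seteqP; split => w // [ha [b /= hb hbw]].
  have ab : a != b by apply/eqP => e; move: aL; rewrite e hb.
  have := hdis a b; rewrite !inE eqxx hb orbT => /(_ isT isT ab).
  by move=> e; have : (F a `&` F b) w by []; rewrite e.
Qed.

Lemma cyl_disj (T : Type) (X : nat -> T -> int) (l N : nat) (s t : seq int) :
  s \in allseqs l N -> t \in allseqs l N -> s != t -> Cyl X N s `&` Cyl X N t = set0.
Proof.
move=> hs ht st; apply/seteqP; split => w // [h1 h2].
move: st; case/negP; apply/eqP.
apply: (@eq_from_nth _ 0); first by rewrite (allseqs_size hs) (allseqs_size ht).
move=> i; rewrite (allseqs_size hs) => hi.
by rewrite -(h1 i hi) -(h2 i hi).
Qed.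

Unset Implicit Arguments.

Lemma finite_bound (d : measure_display) (T : measurableType d)
  (R : realType) (P : probability T R) (X : nat -> T -> int)
  (l : nat) (p : int -> R) (g : R) (xi : nat) (N : nat) :
  step_distribution l p ->
  iid_walk P X p ->
  0 < g -> g < 1 ->
  fgamma l p g = 0 ->
  (0 < xi)%N ->
  (P [set w | exists n, (n <= N)%N /\ (X n w <= - (xi%:Z))%R] <=
     (g / Wf g (- xi%:Z))%:E)%E.
Proof.
move=> [p0 [psupp p1]] [mX [hX0 hcyl]] g0 g1 hf xi0.
have p1' : \sum_(a <- rng l) p a = 1 by rewrite sum_rng big_mkord.
set EN := [set w | _].
set U := \big[setU/set0]_(s <- allseqs l N | ~~ hits xi 0 s) Cyl X N s.
have mU : measurable U by apply: bigsetU_measurable => s _; apply: meas_Cyl.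
have mEN : measurable EN.
  have -> : EN = \bigcup_(n in [set n | (n <= N)%N]) [set w | X n w <= - xi%:Z].
    apply/seteqP; split => w /=.
      by move=> [n [hn h]]; exists n.
    by move=> [n hn h]; exists n.
  by apply: bigcup_measurable => n _; apply: meas_le.
have mH0 : measurable [set w | X 0%N w != 0].
  have -> : [set w | X 0%N w != 0] = ~` [set w | X 0%N w = 0].
    by apply/seteqP; split => w /= /eqP.
  exact/measurableC/mX.
have PU : P U = (NH l p xi N 0)%:E.
  rewrite /U -big_filter measure_seq_disj ?filter_uniq ?allseqs_uniq //.
  - rewrite big_seq (eq_bigr (fun s => (\prod_(a <- s) p a)%:E)); last first.
      move=> s; rewrite mem_filter => /andP [_ hs].
      have hC : P (Cyl X N s) = (\prod_(i < N) p (nth 0 s i))%:E := hcyl N (fun i => nth 0 s i).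
      apply: (eq_trans hC); congr (_%:E); rewrite (big_nth 0) (allseqs_size hs) big_mkord //.
    rewrite -big_seq sumEFin /NH big_filter big_mkcond /=.
    congr (_%:E); apply: eq_bigr => s _; case: (~~ hits xi 0 s) => /=.
      by rewrite mul1r.
    by rewrite mul0r.
  - by move=> s; apply: meas_Cyl.
  - move=> s t; rewrite !mem_filter => /andP [_ hs] /andP [_ ht]; move=> st; apply: (cyl_disj X hs ht st).
have sub : EN `<=` ~` U `|` [set w | X 0%N w != 0].
  move=> w [n [hn hXn]].
  case: (boolP (X 0%N w == 0)) => h0; last by right.
  left => hU.
  move: hU; rewrite /U -big_filter -bigcup_seq => -[s /=].
  rewrite mem_filter => /andP [hs sN] hc.
  have := @path_nohit (fun k => X k w) xi s.
  rewrite (eqP h0) (allseqs_size sN) => /(_ hs hc n hn).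
  by rewrite hXn.
apply: (le_trans (le_measure _ _ _ sub)); rewrite ?inE //; first by apply: measurableU => //; apply: measurableC.
apply: (le_trans (measureU2 _ _ _)); [exact: measurableC | exact: mH0 |].
rewrite [X in (_ + X)%E](_ : _ = 0%E); last exact: hX0.
rewrite adde0 [X in (X <= _)%E](_ : _ = (1 - P U)%E); last exact: probability_setC.
rewrite PU -EFinB lee_fin.
have := NH_bound g0 g1 hf p0 p1' xi0 N 0.
rewrite /Wf lexx add0r expr1z.
lra.
Qed.

Lemma meas_EN (d : measure_display) (T : measurableType d) (X : nat -> T -> int) (xi N : nat) :
  (forall n (k : int), measurable [set w | X n w = k]) ->
  measurable [set w | exists n, (n <= N)%N /\ (X n w <= - (xi%:Z))%R].
Proof.
move=> mX.
have -> : [set w | exists n, (n <= N)%N /\ (X n w <= - (xi%:Z))%R] =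
   \bigcup_(n in [set n | (n <= N)%N]) [set w | X n w <= - xi%:Z].
  apply/seteqP; split => w /=.
    by move=> [n [hn h]]; exists n.
  by move=> [n hn h]; exists n.
by apply: bigcup_measurable => n _; apply: meas_le.
Qed.

Lemma const_eq (R : realType) (g : R) (xi : nat) : 0 < g -> g < 1 -> (0 < xi)%N ->
  g / Wf g (- xi%:Z) = 1 / (g ^- xi.+1 - g^-1 + 1).
Proof.
move=> g0 g1 xi0.
have gn0 : g != 0 by rewrite gt_eqF.
rewrite /Wf.
have -> : (0 <= - xi%:Z) = false by apply/negbTE; rewrite -ltNge oppr_lt0 ltz_nat.
rewrite -exprnN exprSr invfM.
have hx : 0 < g ^+ xi by apply: exprn_gt0.
have hxn : g ^+ xi != 0 by rewrite gt_eqF.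
set a := g ^+ xi in hx hxn *.
have a1 : a <= 1 by rewrite /a; apply: exprn_ile1; lra.
have ai : 1 <= a^-1 by rewrite invf_ge1.
have h1 : a^-1 - 1 + g != 0 by apply/eqP; lra.
have h2 : a^-1 * g^-1 - g^-1 + 1 != 0.
  have e : a^-1 * g^-1 - g^-1 + 1 = (a^-1 - 1 + g) / g.
    by field; rewrite gn0 hxn.
  by rewrite e mulf_neq0 // invr_eq0.
field; rewrite gn0 hxn /=; have : 0 < a * g by apply: mulr_gt0.
by move=> ag; apply/eqP; lra.
Qed.

Theorem mainTheorem8 (d : measure_display) (T : measurableType d)
  (R : realType) (P : probability T R) (X : nat -> T -> int)
  (l : nat) (p : int -> R) (gamma : R) (xi : nat) :
  (0 < l)%N ->
  step_distribution l p ->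
  iid_walk P X p ->
  0 < drift l p ->
  0 < gamma < 1 ->
  fgamma l p gamma = 0 ->
  (0 < xi)%N ->
  (P [set w | exists n, (X n w <= - (xi%:Z))%R] <=
     (1 / (gamma ^- xi.+1 - gamma^-1 + 1))%:E)%E.
Proof.
move=> hl hsd hw hdr /andP [g0 g1] hf xi0.
rewrite -const_eq //.
have mX := hw.1.
pose F := fun N => [set w | exists n, (n <= N)%N /\ (X n w <= - (xi%:Z))%R].
have -> : [set w | exists n, (X n w <= - (xi%:Z))%R] = \bigcup_N F N.
  apply/seteqP; split => w /=.
    by move=> [n h]; exists n => //; exists n.
  by move=> [N _ [n [_ h]]]; exists n.
have mF : forall N, measurable (F N) by move=> N; apply: meas_EN.
have mU : measurable (\bigcup_N F N) by apply: bigcupT_measurable.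
have ndF : nondecreasing_seq F.
  move=> n m nm; apply/subsetPset => w [k [hk h]]; exists k; split => //.
  exact: leq_trans hk nm.
apply: (cvge_to_le (nondecreasing_cvg_mu mF mU ndF)).
apply: nearW => N; have h := @finite_bound _ _ _ P X l p gamma xi N hsd hw g0 g1 hf xi0; rewrite /=; exact h.
Qed.
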